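(* Let $(r_{i,j})_{i\ge 0,\, j\in\mathbb{Z}}$ be the Pascal rhombus, defined by $r_{0,0}=r_{1,-1}=r_{1,0}=r_{1,1}=1$, $r_{0,j}=0$ for $j\neq 0$, $r_{1,j}=0$ for $j\notin\{-1,0,1\}$, and $r_{i,j}=r_{i-1,j-1}+r_{i-1,j}+r_{i-1,j+1}+r_{i-2,j}$ for $i\ge 2$, $j\in\mathbb{Z}$. For every integer $j\ge 0$, the generating function of the $j$th column is $$L_j(x):=\sum_{i\ge 0} r_{i,j}x^i=\frac{F(x)^{j+1}\,C\big(F(x)^2\big)^j}{x\big(1-2F(x)^2C(F(x)^2)\big)},$$ where $F(x)=\frac{x}{1-x-x^2}$ and $C(x)=\frac{1-\sqrt{1-4x}}{2x}$. Moreover, for $0\le j\le i$, $$r_{i,j}=\sum_{m=0}^{i}\sum_{l=0}^{i-j-2m}\binom{2m+j}{m}\binom{l+j+2m}{l}\binom{l}{i-j-2m-l}.$$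
   Context: $F(x)$ is the generating function of the Fibonacci numbers and $C(x)$ that of the Catalan numbers; $C(F(x)^2)$ denotes composition of formal power series. Sums with upper limit smaller than the lower limit are empty. *)

(* Defs.v *)
From mathcomp Require Import all_boot all_order all_algebra.
Set Implicit Arguments. Unset Strict Implicit. Unset Printing Implicit Defensive.
Import Order.TTheory GRing.Theory Num.Theory.
Local Open Scope ring_scope.

Fixpoint rhombus (i : nat) (j : int) : nat :=
  match i with
  | 0%N => if j == 0 then 1%N else 0%N
  | 1%N => if (-1 <= j) && (j <= 1) then 1%N else 0%N
  | (k.+1 as i').+1 =>
      (rhombus i' (j - 1) + rhombus i' j + rhombus i' (j + 1) + rhombus k j)%N
  end.

Definition ps := nat -> int.
Definition ps1 : ps := fun n => (n == 0%N)%:R.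
Definition psX : ps := fun n => (n == 1%N)%:R.
Definition psadd (a b : ps) : ps := fun n => a n + b n.
Definition psopp (a : ps) : ps := fun n => - a n.
Definition psscale (c : int) (a : ps) : ps := fun n => c * a n.
Definition psmul (a b : ps) : ps := fun n => \sum_(k < n.+1) a k * b (n - k)%N.
Definition psexp (a : ps) (k : nat) : ps := iter k (psmul a) ps1.
(* composition c(g(x)); meaningful (and exact) when g 0 = 0, since then
   g^k has no terms of degree < k *)
Definition pscomp (c g : ps) : ps := fun n => \sum_(k < n.+1) c k * psexp g k n.

Fixpoint fib (n : nat) : nat :=
  match n with
  | 0%N => 0%N
  | 1%N => 1%N
  | (k.+1 as m).+1 => (fib m + fib k)%N
  end.
Definition catalan (n : nat) : nat := ('C(n.*2, n) %/ n.+1)%N.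

(* F(x) = sum fib n x^n = x/(1-x-x^2);  C(x) = sum catalan n x^n *)
Definition Fps : ps := fun n => (fib n)%:Z.
Definition Cps : ps := fun n => (catalan n)%:Z.

Definition Lps (j : nat) : ps := fun i => (rhombus i j%:Z)%:Z.

(* Main.v *)
Require Import Defs.
From mathcomp Require Import all_boot all_order all_algebra zify.
From Stdlib Require Import Ring FunctionalExtensionality.
Import Order.TTheory GRing.Theory Num.Theory.
Local Open Scope ring_scope.

Definition ps0 : ps := fun _ => 0.
Definition psub (a b : ps) : ps := psadd a (psopp b).
Definition tr (N : nat) (a : ps) : {poly int} := \poly_(i < N) a i.
Definition eqt (N : nat) (p q : {poly int}) := forall n, (n < N)%N -> p`_n = q`_n.

Lemma tr_coef N a n : (n < N)%N -> (tr N a)`_n = a n.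
Proof. by move=> h; rewrite coef_poly h. Qed.

Lemma eqt_mul N p p' q q' : eqt N p p' -> eqt N q q' -> eqt N (p * q) (p' * q').
Proof.
move=> hp hq n hn; rewrite !coefM; apply: eq_bigr => i _.
have hi : (i < N)%N by apply: leq_ltn_trans hn; rewrite -ltnS.
rewrite hp // hq //; apply: leq_ltn_trans hn; exact: leq_subr.
Qed.

Arguments eqt_mul {N p p' q q'}.
Lemma eqt_refl N p : eqt N p p. Proof. by []. Qed.

Lemma mulE N a b n : (n < N)%N -> psmul a b n = (tr N a * tr N b)`_n.
Proof.
move=> hn; rewrite coefM /psmul; apply: eq_bigr => i _.
have hi : (i < N)%N by apply: leq_ltn_trans hn; rewrite -ltnS.
rewrite !tr_coef //; apply: leq_ltn_trans hn; exact: leq_subr.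
Qed.

Lemma tr_mul N a b : eqt N (tr N (psmul a b)) (tr N a * tr N b).
Proof. by move=> n hn; rewrite tr_coef // (mulE _ _ _ _ hn). Qed.

Lemma psmulA a b c : psmul a (psmul b c) = psmul (psmul a b) c.
Proof.
apply: functional_extensionality => n.
rewrite (mulE _ _ _ _ (ltnSn n)) (mulE _ _ _ _ (ltnSn n)).
rewrite (eqt_mul (eqt_refl _ _) (tr_mul _ _ _) _ (ltnSn n)).
rewrite (eqt_mul (tr_mul _ _ _) (eqt_refl _ _) _ (ltnSn n)).
by rewrite mulrA.
Qed.

Lemma psmulC a b : psmul a b = psmul b a.
Proof.
apply: functional_extensionality => n.
by rewrite (mulE _ _ _ _ (ltnSn n)) (mulE _ _ _ _ (ltnSn n)) mulrC.
Qed.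

Lemma tr1 {N} : (0 < N)%N -> eqt N (tr N ps1) 1.
Proof. by move=> h n hn; rewrite tr_coef // coefC /ps1; case: (n == 0%N). Qed.

Lemma psmul1 a : psmul ps1 a = a.
Proof.
apply: functional_extensionality => n.
rewrite (mulE _ _ _ _ (ltnSn n)) (eqt_mul (tr1 (ltn0Sn n) : eqt n.+1 _ _) (eqt_refl _ _) _ (ltnSn n)).
by rewrite mul1r tr_coef.
Qed.

Lemma psmulDl a b c : psmul (psadd a b) c = psadd (psmul a c) (psmul b c).
Proof.
apply: functional_extensionality => n.
by rewrite /psadd /psmul -big_split; apply: eq_bigr => i _; rewrite mulrDl.
Qed.

Lemma ps_rt : ring_theory ps0 ps1 psadd psmul psub psopp (@eq ps).
Proof.
constructor.
- by move=> a; apply: functional_extensionality => n; rewrite /psadd /ps0 add0r.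
- by move=> a b; apply: functional_extensionality => n; rewrite /psadd addrC.
- by move=> a b c; apply: functional_extensionality => n; rewrite /psadd addrA.
- exact: psmul1.
- exact: psmulC.
- exact: psmulA.
- exact: psmulDl.
- by [].
- by move=> a; apply: functional_extensionality => n; rewrite /psadd /psopp /ps0 subrr.
Qed.

Add Ring psring : ps_rt.


Lemma ps_ext (a b : ps) : (forall n, a n = b n) -> a = b.
Proof. exact: functional_extensionality. Qed.

Lemma mul0c a b : psmul a b 0 = a 0 * b 0.
Proof. by rewrite /psmul big_ord1. Qed.

Lemma mulX0 a : psmul psX a 0 = 0.
Proof. by rewrite mul0c /psX mul0r. Qed.

Lemma mulXS a n : psmul psX a n.+1 = a n.
Proof.
rewrite /psmul big_ord_recl big_ord_recl big1 /=.
  by rewrite /psX /= mul0r mul1r add0r addr0 subSS subn0.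
by move=> i _; rewrite /psX /= mul0r.
Qed.

Lemma psexpS a k : psexp a k.+1 = psmul a (psexp a k).
Proof. by []. Qed.

Lemma psexp_add a m k : psexp a (m + k) = psmul (psexp a m) (psexp a k).
Proof.
elim: m => [|m IH]; first by rewrite add0n /= psmul1.
by rewrite addSn !psexpS IH psmulA.
Qed.

Lemma psexp_mul a p m : psexp (psexp a p) m = psexp a (p * m).
Proof.
elim: m => [|m IH]; first by rewrite muln0.
by rewrite psexpS IH mulnS psexp_add.
Qed.

Arguments tr_coef {N a n}.
Lemma eqt_trans N p q r : eqt N p q -> eqt N q r -> eqt N p r.
Proof. by move=> h1 h2 n hn; rewrite h1 // h2. Qed.

Lemma eqt_sym N p q : eqt N p q -> eqt N q p.
Proof. by move=> h n hn; rewrite h. Qed.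

Lemma tr_exp N g k : eqt N (tr N (psexp g k)) ((tr N g) ^+ k).
Proof.
case: N => [|N]; first by move=> n.
elim: k => [|k IH]; first by rewrite expr0; exact: tr1.
rewrite exprS psexpS; apply: eqt_trans (tr_mul _ _ _) _.
exact: eqt_mul (eqt_refl _ _) IH.
Qed.

Arguments tr_exp {N g k}.
Arguments eqt_sym {N p q}.
Arguments eqt_trans {N p q r}.
Lemma polypow0 (r : {poly int}) i n : r`_0 = 0 -> (n < i)%N -> (r ^+ i)`_n = 0.
Proof.
move=> r0; elim: i n => [|i IH] n //.
move=> hn; rewrite exprS coefM big1 // => j _.
case: j => [[|j] hj] /=; first by rewrite r0 mul0r.
rewrite IH ?mulr0 //; lia.
Qed.

Lemma powg0 g k n : g 0 = 0 -> (n < k)%N -> psexp g k n = 0.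
Proof.
move=> g0 hn; rewrite -(tr_coef (ltnSn n)) (tr_exp _ (ltnSn n)).
by apply: polypow0 => //; rewrite tr_coef.
Qed.

Lemma compE c g n N : g 0 = 0 -> (n < N)%N ->
  pscomp c g n = \sum_(k < N) c k * psexp g k n.
Proof.
move=> g0 hn; rewrite /pscomp -!(big_mkord xpredT (fun k => c k * psexp g k n)).
rewrite (@big_cat_nat _ _ _ n.+1 0 N _ _ (leq0n _) hn) /= [X in _ + X]big1_seq ?addr0 //.
move=> k /andP[_]; rewrite mem_index_iota => /andP[hk _].
by rewrite powg0 ?mulr0.
Qed.

Lemma comp_coef c (r : {poly int}) N n :
  ((tr N c) \Po r)`_n = \sum_(k < N) c k * (r ^+ k)`_n.
Proof.
rewrite /tr poly_def linear_sum coef_sum; apply: eq_bigr => k _.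
by rewrite /= comp_polyZ comp_Xn_poly coefZ.
Qed.

Lemma tr_comp c g N : g 0 = 0 -> eqt N (tr N (pscomp c g)) ((tr N c) \Po (tr N g)).
Proof.
move=> g0 n hn; rewrite tr_coef // comp_coef (compE _ _ _ _ g0 hn).
by apply: eq_bigr => k _; rewrite -(tr_exp _ hn) tr_coef.
Qed.

Lemma eqt_comp N p p' (r : {poly int}) : r`_0 = 0 -> eqt N p p' -> eqt N (p \Po r) (p' \Po r).
Proof.
move=> r0 h n hn; apply/eqP; rewrite -subr_eq0 -coefB -linearB /=.
rewrite coef_comp_poly big1 // => i _.
case: (ltnP i N) => hi; first by rewrite coefB h // subrr mul0r.
by rewrite polypow0 ?mulr0 //; lia.
Qed.

Arguments tr_comp c {g N}.
Arguments eqt_comp {N p p' r}.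
Lemma comp_mul a b g : g 0 = 0 -> pscomp (psmul a b) g = psmul (pscomp a g) (pscomp b g).
Proof.
move=> g0; apply: ps_ext => n.
have g0' : (tr n.+1 g)`_0 = 0 by rewrite tr_coef.
rewrite (mulE _ _ _ _ (ltnSn n)) -(tr_coef (ltnSn n)) (tr_comp _ g0 _ (ltnSn n)).
rewrite (eqt_comp g0' (tr_mul _ _ _) _ (ltnSn n)) comp_polyM.
by rewrite (eqt_mul (eqt_sym (tr_comp _ g0)) (eqt_sym (tr_comp _ g0)) _ (ltnSn n)).
Qed.

Lemma comp_add a b g : pscomp (psadd a b) g = psadd (pscomp a g) (pscomp b g).
Proof.
apply: ps_ext => n; rewrite /pscomp /psadd -big_split; apply: eq_bigr => k _.
by rewrite mulrDl.
Qed.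

Lemma comp_opp a g : pscomp (psopp a) g = psopp (pscomp a g).
Proof.
apply: ps_ext => n; rewrite /pscomp /psopp -sumrN; apply: eq_bigr => k _.
by rewrite mulNr.
Qed.

Lemma comp_sub a b g : pscomp (psub a b) g = psub (pscomp a g) (pscomp b g).
Proof. by rewrite /psub comp_add comp_opp. Qed.

Lemma comp_one g : pscomp ps1 g = ps1.
Proof.
apply: ps_ext => n; rewrite /pscomp big_ord_recl big1 ?addr0 /=.
  by rewrite /ps1 /= mul1r.
by move=> i _; rewrite /ps1 /= mul0r.
Qed.

Lemma comp_X g : g 0 = 0 -> pscomp psX g = g.
Proof.
move=> g0; apply: ps_ext => n; rewrite (compE _ _ _ n.+2 g0 (leqW (ltnSn n))).
rewrite big_ord_recl big_ord_recl big1 /=.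
  by rewrite /psX /= mul0r mul1r add0r addr0 -/(psexp g 1) /= psmulC psmul1.
by move=> i _; rewrite /psX /= mul0r.
Qed.

Lemma comp_exp a g k : g 0 = 0 -> pscomp (psexp a k) g = psexp (pscomp a g) k.
Proof.
move=> g0; elim: k => [|k IH]; first exact: comp_one.
by rewrite !psexpS comp_mul // IH.
Qed.

Definition psd (a : ps) : ps := fun n => (n.+1)%:R * a n.+1.

Lemma tr_d N a : eqt N (tr N (psd a)) (deriv (tr N.+1 a)).
Proof.
move=> n hn; rewrite tr_coef // coef_deriv tr_coef ?ltnS // /psd.
by rewrite mulr_natl.
Qed.

Lemma eqt_S N a : eqt N (tr N.+1 a) (tr N a).
Proof. by move=> n hn; rewrite !tr_coef // ltnS ltnW. Qed.

Lemma psdM a b : psd (psmul a b) = psadd (psmul (psd a) b) (psmul a (psd b)).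
Proof.
apply: ps_ext => n; rewrite /psd /psadd (mulE _ _ _ _ (ltnSn n.+1)) mulr_natl -coef_deriv.
rewrite derivM coefD.
rewrite (eqt_mul (eqt_sym (tr_d n.+1 a)) (eqt_S n.+1 b) _ (ltnSn n)).
rewrite (eqt_mul (eqt_S n.+1 a) (eqt_sym (tr_d n.+1 b)) _ (ltnSn n)).
by rewrite -!(mulE _ _ _ _ (ltnSn n)).
Qed.

Lemma psdD a b : psd (psadd a b) = psadd (psd a) (psd b).
Proof. by apply: ps_ext => n; rewrite /psd /psadd mulrDr. Qed.

Lemma psdN a : psd (psopp a) = psopp (psd a).
Proof. by apply: ps_ext => n; rewrite /psd /psopp mulrN. Qed.

Lemma psdB a b : psd (psub a b) = psub (psd a) (psd b).
Proof. by rewrite /psub psdD psdN. Qed.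

Lemma psd1 : psd ps1 = ps0.
Proof. by apply: ps_ext => n; rewrite /psd /ps1 /ps0 /= mulr0. Qed.

Lemma psdX : psd psX = ps1.
Proof. by apply: ps_ext => [[|n]]; rewrite /psd /ps1 /psX /= ?mulr1 ?mulr0. Qed.

Lemma psd_const a : psd a = ps0 -> a 0 = 1 -> a = ps1.
Proof.
move=> h h0; apply: ps_ext => [[|n]] //.
have := congr1 (fun f => f n) h; rewrite /psd /ps0 /ps1 /= => /eqP.
by rewrite mulf_eq0 pnatr_eq0 /= => /eqP.
Qed.

Lemma cancelX a : psmul psX a = ps0 -> a = ps0.
Proof. by move=> h; apply: ps_ext => n; rewrite -mulXS h. Qed.

Lemma cancel2 a : psadd a a = ps0 -> a = ps0.
Proof.
move=> h; apply: ps_ext => n; have := congr1 (fun f => f n) h.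
rewrite /psadd /ps0 /= => e; lia.
Qed.

Lemma cancel2X a : psmul psX (psadd a a) = ps0 -> a = ps0.
Proof. by move=> h; apply: cancel2; apply: cancelX. Qed.

Lemma ps_eq_sub a b : psub a b = ps0 -> a = b.
Proof.
move=> h; apply: ps_ext => n; have := congr1 (fun f => f n) h.
rewrite /psub /psadd /psopp /ps0 /= => e; lia.
Qed.

Lemma bin_mid k : ('C(k.*2, k) = k.+1 * ('C(k.*2,k) - 'C(k.*2,k.+1)))%N.
Proof.
have h := mul_bin_left k.*2 k.
have e : (k.*2 - k = k)%N by lia.
rewrite e in h; nia.
Qed.

Lemma cat_mul k : (catalan k * k.+1 = 'C(k.*2,k))%N.
Proof. by rewrite /catalan {1}bin_mid mulKn // mulnC -bin_mid. Qed.

Lemma bin_central n : (n.+1 * 'C((n.+1).*2, n.+1) = (4*n+2) * 'C(n.*2, n))%N.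
Proof.
have h1 := mul_bin_diag (n.+1).*2 n.
have h2 := mul_bin_diag (n.*2).+1 n.
have h3 : 'C((n.*2).+1, n.+1) = 'C((n.*2).+1, n).
  by rewrite -bin_sub; [congr binomial; lia | lia].
have e : ((n.+1).*2.-1 = (n.*2).+1)%N by rewrite doubleS.
rewrite e /= h3 in h1 h2; nia.
Qed.

Lemma cat_rec k : (k.+2 * catalan k.+1 = (4*k+2) * catalan k)%N.
Proof.
apply/eqP; rewrite -(eqn_pmul2l (ltn0Sn k)); apply/eqP.
have h1 := cat_mul k.+1. have h2 := cat_mul k. have h3 := bin_central k.
nia.
Qed.

Definition psB (j : nat) : ps := fun m => ('C((2 * m + j)%N, m))%:Z.
Definition X4 (a : ps) : ps := psadd (psadd a a) (psadd a a).
Definition P0 : ps := psmul psX Cps.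

Lemma Y1 j : psB j.+1 = psadd (psB j) (psmul psX (psB j.+2)).
Proof.
apply: ps_ext => [[|m]]; rewrite /psadd ?mulX0 ?mulXS /psB.
  by rewrite !muln0 !add0n !bin0 addr0.
have -> : (2 * m.+1 + j.+1 = (2 * m.+1 + j).+1)%N by lia.
have -> : (2 * m + j.+2 = 2 * m.+1 + j)%N by lia.
rewrite binS; lia.
Qed.

Lemma Y2 : psB 0 = psadd ps1 (psadd (psmul psX (psB 1)) (psmul psX (psB 1))).
Proof.
apply: ps_ext => [[|m]]; rewrite /psadd ?mulX0 ?mulXS /psB /ps1 /=.
  by rewrite bin0 !addr0.
have -> : (2 * m.+1 + 0 = (2 * m + 1).+1)%N by lia.
rewrite binS.
have -> : 'C((2 * m + 1)%N, m.+1) = 'C((2 * m + 1)%N, m).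
  by rewrite -bin_sub; [congr binomial; lia | lia].
lia.
Qed.

Lemma Y3 : psub (psd (psB 0)) (psadd (X4 (psmul psX (psd (psB 0)))) (psadd (psB 0) (psB 0))) = ps0.
Proof.
apply: ps_ext => [[|k]]; rewrite /psub /X4 /psadd /psopp /ps0 ?mulX0 ?mulXS /psd /psB /=.
  by rewrite bin0.
have h := bin_central k.+1.
rewrite !addn0 !mul2n in h *.
lia.
Qed.

Lemma cat0 : catalan 0 = 1%N. Proof. by []. Qed.

Lemma Y4 : psub (psd P0) (psadd (X4 (psmul psX (psd P0))) (psub ps1 (psadd P0 P0))) = ps0.
Proof.
apply: ps_ext => [[|k]]; rewrite /psub /X4 /psadd /psopp /ps0 ?mulX0 ?mulXS /psd /P0 ?mulX0 ?mulXS /ps1 /Cps /=.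
  by rewrite cat0.
have h := cat_rec k.
lia.
Qed.

Lemma cancelX4 a : psmul psX (X4 a) = ps0 -> a = ps0.
Proof. by move=> h; apply: cancel2; apply: cancel2X. Qed.

Local Notation D := (psB 0).
Local Notation Q4 := (psub ps1 (X4 psX)).

Lemma E1 : psmul (psmul D D) Q4 = ps1.
Proof.
apply: psd_const.
  rewrite psdM psdM psdB psd1 /X4 !psdD psdX.
  transitivity (psmul (psadd D D) (psub (psd D) (psadd (X4 (psmul psX (psd D))) (psadd D D)))).
    rewrite /X4; ring.
  rewrite Y3; ring.
by rewrite !mul0c /psub /psadd /psopp /X4 /psadd /psX /ps1 /psB /=.
Qed.

Local Notation S := (psub ps1 (psadd P0 P0)).

Lemma E2 : psmul S D = ps1.
Proof.
apply: psd_const.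
  have hQ : psmul (psd (psmul S D)) Q4 = ps0.
    rewrite psdM psdB psd1 psdD.
    transitivity (psadd (psmul (psopp (psadd D D))
        (psub (psd P0) (psadd (X4 (psmul psX (psd P0))) (psub ps1 (psadd P0 P0)))))
      (psmul S (psub (psd D) (psadd (X4 (psmul psX (psd D))) (psadd D D))))).
      rewrite /X4; ring.
    rewrite Y3 Y4; ring.
  transitivity (psmul (psd (psmul S D)) (psmul (psmul D D) Q4)).
    rewrite E1; ring.
  transitivity (psmul (psmul (psd (psmul S D)) Q4) (psmul D D)).
    ring.
  rewrite hQ; ring.
rewrite !mul0c /psub /psadd /psopp /P0 mulX0 /psB /ps1 /=.
by rewrite subr0 mul1r.
Qed.

Lemma E3 : psmul Cps D = psB 1.
Proof.
apply: ps_eq_sub; apply: cancel2X.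
transitivity (psadd (psub ps1 (psmul S D))
   (psub D (psadd ps1 (psadd (psmul psX (psB 1)) (psmul psX (psB 1)))))).
  rewrite /P0; ring.
rewrite E2 -Y2; ring.
Qed.

Lemma E4 : Cps = psadd ps1 (psmul psX (psmul Cps Cps)).
Proof.
apply: esym; apply: ps_eq_sub; apply: cancelX4.
transitivity (psadd (psmul (psmul S S) (psub ps1 (psmul (psmul D D) Q4)))
   (psmul (psub (psmul (psmul S D) (psmul S D)) ps1) Q4)).
  rewrite /P0 /X4; ring.
rewrite E1 E2; ring.
Qed.

Lemma psexp0 a : psexp a 0 = ps1. Proof. by []. Qed.

Lemma E5 j : psB j = psmul (psexp Cps j) D.
Proof.
suff : psB j = psmul (psexp Cps j) D /\ psB j.+1 = psmul (psexp Cps j.+1) D by case.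
elim: j => [|j [h0 h1]].
  split; first by rewrite psexp0; ring.
  by rewrite psexpS psexp0 -E3; ring.
split => //.
apply: ps_eq_sub; apply: cancelX.
transitivity (psub (psub (psadd (psmul (psexp Cps j) D) (psmul psX (psB j.+2))) (psmul (psexp Cps j.+1) D))
   (psmul (psmul (psexp Cps j) D) (psub (psadd ps1 (psmul psX (psmul Cps Cps))) Cps))).
  rewrite !psexpS; ring.
rewrite -h0 -h1 -Y1 -E4; ring.
Qed.

Local Notation G := (psexp Fps 2).
Local Notation Kc := (pscomp Cps (psexp Fps 2)).
Local Notation Bc j := (pscomp (psB j) (psexp Fps 2)).
Local Notation Q := (psub ps1 (psadd psX (psmul psX psX))).

Lemma F0 : Fps 0 = 0. Proof. by []. Qed.

Lemma Fexp0 k : psexp Fps k.+1 0 = 0.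
Proof. by rewrite psexpS mul0c F0 mul0r. Qed.

Lemma G0 : G 0 = 0. Proof. exact: Fexp0. Qed.

Lemma G_eq : G = psmul Fps Fps.
Proof. by rewrite !psexpS psexp0; ring. Qed.

Lemma EX2 : psmul (psub ps1 (psadd (psmul G Kc) (psmul G Kc))) (Bc 0) = ps1.
Proof.
have h : pscomp (psmul S D) G = pscomp ps1 G by rewrite E2.
move: h.
by rewrite comp_mul ?G0 // comp_sub comp_one comp_add /P0 comp_mul ?G0 // comp_X ?G0 // comp_one.
Qed.

Lemma EX5 j : Bc j = psmul (psexp Kc j) (Bc 0).
Proof. by rewrite {1}E5 comp_mul ?G0 // comp_exp ?G0. Qed.

Lemma EY1 j : Bc j.+1 = psadd (Bc j) (psmul (psmul Fps Fps) (Bc j.+2)).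
Proof.
rewrite {1}(Y1 j) comp_add comp_mul ?G0 // comp_X ?G0 //.
by congr psadd; congr psmul; exact: G_eq.
Qed.

Lemma EY2 : Bc 0 = psadd ps1 (psadd (psmul (psmul Fps Fps) (Bc 1)) (psmul (psmul Fps Fps) (Bc 1))).
Proof.
rewrite {1}Y2 !comp_add comp_one comp_mul ?G0 // comp_X ?G0 //.
by rewrite -G_eq.
Qed.

Lemma FQ : psmul Fps Q = psX.
Proof.
transitivity (psub (psub Fps (psmul psX Fps)) (psmul psX (psmul psX Fps))).
  ring.
apply: ps_ext => [[|[|n]]]; rewrite /psub /psadd /psopp ?mulX0 ?mulXS ?mulX0 /psX /Fps /=.
- by rewrite !subr0.
- by rewrite subr0.
- lia.
Qed.

Definition M j := psmul (psexp Fps j.+1) (Bc j).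

Lemma MR j : psmul (M j.+1) Q = psmul psX (psadd (M j) (M j.+2)).
Proof.
rewrite /M (EY1 j) (psexpS Fps j.+2) (psexpS Fps j.+1).
apply: ps_eq_sub.
transitivity (psmul (psub (psmul Fps Q) psX) (psmul (psexp Fps j.+1) (psadd (Bc j) (psmul (psmul Fps Fps) (Bc j.+2))))).
  ring.
rewrite FQ; ring.
Qed.

Lemma MR0 : psmul (M 0) Q = psadd psX (psadd (psmul psX (M 1)) (psmul psX (M 1))).
Proof.
have M1e : M 1 = psmul (psmul Fps Fps) (Bc 1) by rewrite /M [X in psmul X _]G_eq.
have e1 : psexp Fps 1 = Fps by rewrite psexpS psexp0; ring.
rewrite M1e /M EY2 e1.
apply: ps_eq_sub.
transitivity (psmul (psub (psmul Fps Q) psX) (psadd ps1 (psadd (psmul (psmul Fps Fps) (Bc 1)) (psmul (psmul Fps Fps) (Bc 1))))).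
  ring.
rewrite FQ; ring.
Qed.

Lemma rec_coef a R : psmul a Q = R -> a = psadd R (psadd (psmul psX a) (psmul psX (psmul psX a))).
Proof. move=> h; rewrite -h; ring. Qed.

Lemma M0c j : M j 0 = 0.
Proof. by rewrite /M mul0c Fexp0 mul0r. Qed.

Lemma MrecS j n : M j.+1 n.+2 = M j n.+1 + M j.+2 n.+1 + M j.+1 n.+1 + M j.+1 n.
Proof. rewrite {1}(rec_coef _ _ (MR j)) /psadd !mulXS /psadd; lia. Qed.

Lemma M1S j : M j.+1 1 = 0.
Proof. rewrite {1}(rec_coef _ _ (MR j)) /psadd !mulXS mulX0 /psadd !M0c; lia. Qed.

Lemma Mrec0 n : M 0 n.+2 = M 1 n.+1 + M 1 n.+1 + M 0 n.+1 + M 0 n.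
Proof. rewrite {1}(rec_coef _ _ MR0) /psadd !mulXS /psadd /psX /=; lia. Qed.

Lemma M01 : M 0 1 = 1.
Proof. rewrite {1}(rec_coef _ _ MR0) /psadd !mulXS mulX0 /psadd !M0c /psX /=; lia. Qed.

Lemma rhS k j : rhombus k.+2 j = (rhombus k.+1 (j - 1) + rhombus k.+1 j + rhombus k.+1 (j + 1) + rhombus k j)%N.
Proof. by []. Qed.

Lemma rh0 j : rhombus 0 j = if j == 0 then 1%N else 0%N. Proof. by []. Qed.
Lemma rh1 j : rhombus 1 j = if (-1 <= j) && (j <= 1) then 1%N else 0%N. Proof. by []. Qed.

Lemma rh_sym i j : rhombus i (- j) = rhombus i j.
Proof.
suff : (forall j, rhombus i (- j) = rhombus i j) /\ (forall j, rhombus i.+1 (- j) = rhombus i.+1 j) by case.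
elim: i => [|i [IH1 IH2]].
  split => k; first by rewrite !rh0 oppr_eq0.
  rewrite !rh1; do 2 case: ifP => //; lia.
split => // k; rewrite !rhS.
have -> : - k - 1 = - (k + 1) by lia.
have -> : - k + 1 = - (k - 1) by lia.
rewrite !IH2 IH1.
set A := rhombus _ (k + 1); set B := rhombus _ (k - 1); set C := rhombus i.+1 k; lia.
Qed.

Lemma link i : (forall j : nat, M j i.+1 = (rhombus i j)%:Z) /\ (forall j : nat, M j i.+2 = (rhombus i.+1 j)%:Z).
Proof.
elim: i => [|i [IH1 IH2]].
  split.
    case => [|j]; first by rewrite M01.
    by rewrite M1S rh0.
  case => [|j].
    by rewrite Mrec0 M01 M1S !M0c rh1.
  rewrite MrecS M1S M1S M0c rh1.
  case: j => [|j]; first by rewrite M01.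
  rewrite (M1S j); case E : (_ && _); lia.
split => // -[|j].
  rewrite Mrec0 IH2 IH2 IH1 rhS sub0r add0r rh_sym; rewrite (_ : (1 : int) = Posz 1) //; lia.
rewrite MrecS IH2 IH2 IH2 IH1 rhS.
have -> : (j.+1%:Z - 1 = j%:Z) by lia.
have -> : (j.+1%:Z + 1 = j.+2%:Z) by lia.
lia.
Qed.

Lemma XL j : psmul psX (Lps j) = M j.
Proof.
apply: ps_ext => [[|n]]; first by rewrite mulX0 M0c.
by rewrite mulXS (link n).1.
Qed.

Lemma scale2 a : psscale 2 a = psadd a a.
Proof. by apply: ps_ext => n; rewrite /psscale /psadd; lia. Qed.

Lemma part1 j : psmul (psmul psX (psadd ps1 (psopp (psscale 2 (psmul G Kc))))) (Lps j)
   = psmul (psexp Fps j.+1) (psexp Kc j).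
Proof.
rewrite scale2.
transitivity (psmul (psub ps1 (psadd (psmul G Kc) (psmul G Kc))) (psmul psX (Lps j))).
  rewrite /psub; ring.
rewrite XL /M (EX5 j).
transitivity (psmul (psmul (psexp Fps j.+1) (psexp Kc j)) (psmul (psub ps1 (psadd (psmul G Kc) (psmul G Kc))) (Bc 0))).
  ring.
rewrite EX2; ring.
Qed.

Lemma mul_comp a c g n : g 0 = 0 ->
  psmul a (pscomp c g) n = \sum_(m < n.+1) c m * psmul a (psexp g m) n.
Proof.
move=> g0.
transitivity (\sum_(k < n.+1) \sum_(m < n.+1) c m * (a k * psexp g m (n - k)%N)).
  rewrite /psmul; apply: eq_bigr => k _.
  rewrite (compE _ _ _ n.+1 g0) ?ltnS ?leq_subr // big_distrr; apply: eq_bigr => m _.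
  by rewrite /= mulrCA.
rewrite exchange_big; apply: eq_bigr => m _.
by rewrite /psmul big_distrr.
Qed.

Lemma Xpow p a n : psmul (psexp psX p) a n = if (p <= n)%N then a (n - p)%N else 0.
Proof.
elim: p n => [|p IH] n; first by rewrite psexp0 psmul1 subn0.
rewrite psexpS -psmulA; case: n => [|n]; first by rewrite mulX0.
by rewrite mulXS IH ltnS subSS.
Qed.

Definition psE (k : nat) : ps := fun l => ('C((l + k)%N, l))%:Z.
Local Notation H := (psadd psX (psmul psX psX)).

Lemma H0 : H 0 = 0.
Proof. by rewrite /psadd mulX0 /psX /= addr0. Qed.

Lemma mul1X a : psmul a (psub ps1 psX) = psub a (psmul psX a).
Proof. ring. Qed.

Lemma PE0 : psmul (psE 0) (psub ps1 psX) = ps1.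
Proof.
rewrite mul1X; apply: ps_ext => [[|l]]; rewrite /psub /psadd /psopp ?mulX0 ?mulXS /psE /ps1 /=.
  by rewrite subr0.
by rewrite !addn0 !binn subrr.
Qed.

Lemma PES k : psmul (psE k.+1) (psub ps1 psX) = psE k.
Proof.
rewrite mul1X; apply: ps_ext => [[|l]]; rewrite /psub /psadd /psopp ?mulX0 ?mulXS /psE /=.
  by rewrite !bin0 subr0.
rewrite addSn binS addnS addSn; lia.
Qed.

Definition V k := pscomp (psE k) H.

Lemma VQ0 : psmul (V 0) Q = ps1.
Proof.
have h : pscomp (psmul (psE 0) (psub ps1 psX)) H = pscomp ps1 H by rewrite PE0.
by move: h; rewrite comp_mul ?H0 // comp_sub comp_one comp_X ?H0.
Qed.

Lemma VQS k : psmul (V k.+1) Q = V k.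
Proof.
have h : pscomp (psmul (psE k.+1) (psub ps1 psX)) H = pscomp (psE k) H by rewrite PES.
by move: h; rewrite comp_mul ?H0 // comp_sub comp_one comp_X ?H0.
Qed.

Lemma Fpow k : psexp Fps k.+1 = psmul (psexp psX k.+1) (V k).
Proof.
elim: k => [|k IH].
  transitivity (psmul Fps (psmul (V 0) Q)); first by rewrite VQ0 psexpS psexp0; ring.
  transitivity (psmul (psmul Fps Q) (V 0)); first by ring.
  by rewrite FQ psexpS psexp0; ring.
rewrite (psexpS Fps k.+1) IH -(VQS k).
transitivity (psmul (psmul Fps Q) (psmul (psexp psX k.+1) (V k.+1))); first by ring.
rewrite FQ (psexpS psX k.+1); ring.
Qed.

Lemma eqt_exp N p q l : eqt N p q -> eqt N (p ^+ l) (q ^+ l).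
Proof.
move=> h; elim: l => [|l IH]; first by rewrite !expr0; exact: eqt_refl.
by rewrite !exprS; exact: eqt_mul h IH.
Qed.

Lemma trH N : eqt N (tr N H) ('X * ('X + 1)).
Proof.
move=> n hn; rewrite tr_coef // coefXM.
case: n hn => [|n] hn /=; first exact: H0.
rewrite /psadd mulXS coefD coefX coef1 /psX.
by case: n {hn} => [|[|n]].
Qed.

Lemma coefX1pow l k : (('X + 1 : {poly int}) ^+ l)`_k = ('C(l, k))%:Z.
Proof.
rewrite exprD1n coef_sum.
case: (leqP k l) => hk.
  have hk' : (k < l.+1)%N by rewrite ltnS.
  rewrite (bigD1 (Ordinal hk')) //= coefMn coefXn eqxx big1.
    by rewrite addr0 -natz.
  move=> i hi; rewrite coefMn coefXn.
  have -> : (k == i) = false.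
    apply/negbTE; move: hi; apply: contra => /eqP e; apply/eqP; apply: val_inj; by rewrite /= e.
  by rewrite mul0rn.
rewrite bin_small // big1 // => i _; rewrite coefMn coefXn.
have -> : (k == i) = false by apply/negbTE; rewrite neq_ltn (leq_trans (ltn_ord i)) ?orbT.
by rewrite mul0rn.
Qed.


Lemma Hpow l t : (l <= t)%N -> psexp H l t = ('C(l, t - l))%:Z.
Proof.
move=> h; rewrite -(tr_coef (ltnSn t)).
rewrite (tr_exp _ (ltnSn t)).
rewrite (eqt_exp _ _ _ l (trH t.+1) _ (ltnSn t)).
rewrite exprMn coefXnM.
have -> : (t < l)%N = false by rewrite ltnNge h.
exact: coefX1pow.
Qed.

Lemma Vcoef k t : V k t = \sum_(l < t.+1) ('C(l + k, l) * 'C(l, t - l))%N%:Z.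
Proof.
rewrite /V /pscomp; apply: eq_bigr => l _.
rewrite Hpow; last by rewrite -ltnS.
by rewrite /psE PoszM.
Qed.

Lemma term j m n : psmul (psexp Fps j.+1) (psexp G m) n.+1 =
  if (2 * m + j <= n)%N then V (2 * m + j) (n - (2 * m + j))%N else 0.
Proof.
rewrite psexp_mul -psexp_add (_ : (j.+1 + 2 * m = (2 * m + j).+1)%N); last by lia.
by rewrite Fpow Xpow ltnS subSS.
Qed.

Lemma part2 i j : rhombus i j%:Z =
      (\sum_(m < i.+1 | (j + 2 * m <= i)%N)
         \sum_(l < (i - j - 2 * m).+1)
            'C(2 * m + j, m) * 'C(l + j + 2 * m, l) * 'C(l, i - j - 2 * m - l))%N.
Proof.
suff h : (rhombus i j%:Z)%:Z = ((\sum_(m < i.+1 | (j + 2 * m <= i)%N)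
         \sum_(l < (i - j - 2 * m).+1)
            'C(2 * m + j, m) * 'C(l + j + 2 * m, l) * 'C(l, i - j - 2 * m - l))%N)%:Z.
  by case: h.
rewrite -(link i).1 /M mul_comp ?G0 //.
under eq_bigr do rewrite term.
rewrite big_ord_recr /= ifF ?mulr0 ?addr0; last by lia.
rewrite (big_morph Posz PoszD (erefl _)) [RHS]big_mkcond /=.
apply: eq_bigr => m _.
rewrite (_ : (2 * m + j <= i)%N = (j + 2 * m <= i)%N); last by rewrite addnC.
case: ifP => hc; last by rewrite mulr0.
rewrite Vcoef (_ : (i - (2 * m + j) = i - j - 2 * m)%N); last by lia.
rewrite (big_morph Posz PoszD (erefl _)) mulr_sumr; apply: eq_bigr => l _.
rewrite /psB !PoszM mulrA.
by rewrite (_ : (l + (2 * m + j) = l + j + 2 * m)%N); last by lia.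
Qed.

Theorem corollary2p4 :
  (forall (j : nat) (n : nat),
      psmul (psmul psX
               (psadd ps1 (psopp (psscale 2 (psmul (psexp Fps 2)
                                               (pscomp Cps (psexp Fps 2)))))))
            (Lps j) n
      = psmul (psexp Fps j.+1) (psexp (pscomp Cps (psexp Fps 2)) j) n)
  /\
  (forall (i j : nat), (j <= i)%N ->
      rhombus i j%:Z =
      (\sum_(m < i.+1 | (j + 2 * m <= i)%N)
         \sum_(l < (i - j - 2 * m).+1)
            'C(2 * m + j, m) * 'C(l + j + 2 * m, l) * 'C(l, i - j - 2 * m - l))%N).
Proof.
split.
  by move=> j n; rewrite part1.
by move=> i j _; exact: part2.
Qed.
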